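(* For all even $m\geq 2$ one has \begin{enumerate} \item $S_m^0\odot \mu = -S_m^0\,\mu$; \item The mapping $(\mathbb{Q}^\mathscr{P},\odot)\to(\mathbb{Q}^\mathscr{P},\odot),\ f\mapsto S_m\,|\, f$ is a derivation, uniquely determined on $\mathcal{T}$ by $S_m\,|\, T_{k,l} = T_{k+m-1,l+1}$. \end{enumerate}
   Context: $\mathscr{P}$ is the set of partitions and $r_m(\lambda)$ the number of parts of $\lambda$ equal to $m$. $S_m(\lambda)=-\frac{B_m}{2m}+\sum_i\lambda_i^{m-1}$ for even $m$, and $S_m^0=S_m-S_m(\emptyset)$. $\mu:\mathscr{P}\to\{-1,0,1\}$ is given by $\mu(\lambda)=(-1)^{\ell(\lambda)}$ if $\lambda$ is strict (no repeated parts) and $0$ otherwise; $S_m^0\mu$ is the pointwise product. The induced product $\odot$ is defined by $\langle f\odot g\rangle_{\vec u}=\langle f\rangle_{\vec u}\langle g\rangle_{\vec u}$ with $\langle f\rangle_{\vec u}=\sum_\lambda f(\lambda)u_{\lambda_1}u_{\lambda_2}\cdots/\sum_\lambda u_{\lambda_1}u_{\lambda_2}\cdots$; equivalently $(f\odot g)(\lambda)=\sum_{\alpha\cup\beta\cup\gamma=\lambda}f(\alpha)g(\beta)\mu(\gamma)$ (multiset unions). The connected product of two functions is $S_m|f=S_mf-S_m\odot f$. The Faulhaber polynomial $F_l$ is the polynomial with zero constant term with $F_l(n)=\sum_{i=1}^n i^{l-1}$ for $n\ge1$; $T_{k,l}(\lambda)=-\frac{B_{k+l}}{2(k+l)}(\delta_{l,1}+\delta_{k,0})+\sum_{m'\ge1}m'^kF_l(r_{m'}(\lambda))$,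 and $\mathcal{T}$ is the algebra generated by the $T_{k,l}$, which has a basis of induced products $T_{k_1,l_1}\odot\cdots\odot T_{k_n,l_n}$. *)

(* Defs.v *)
From HB Require Import structures.
From mathcomp Require Import all_boot all_order all_algebra.
Set Implicit Arguments. Unset Strict Implicit. Unset Printing Implicit Defensive.
Import Order.TTheory GRing.Theory Num.Theory.
Local Open Scope ring_scope.

Definition is_part (s : seq nat) : bool :=
  sorted geq s && all (fun x => (0 < x)%N) s.

Record part := Part { pval :> seq nat; pvalP : is_part pval }.
HB.instance Definition _ := [isSub for pval].
HB.instance Definition _ := [Equality of part by <:].

Lemma mkpart_proof (s : seq nat) :
  is_part (sort geq [seq x <- s | (0 < x)%N]).
Proof.
apply/andP; split.
  by apply: sort_sorted => x y; apply: leq_total.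
by rewrite all_sort; apply/allP => x; rewrite mem_filter => /andP [].
Qed.

Definition mkpart (s : seq nat) : part := Part (mkpart_proof s).

Definition empty_part : part := mkpart [::].

Fixpoint allbits (n : nat) : seq bitseq :=
  if n is n'.+1 then [seq b :: t | b <- [:: true; false], t <- allbits n']
  else [:: [::]].

Definition submultisets (la : part) : seq part :=
  undup [seq mkpart (mask b la) | b <- allbits (size la)].

Definition mdiff (l a : seq nat) : seq nat := foldr (fun x s => rem x s) l a.

Definition mu (la : part) : rat :=
  if uniq la then (-1) ^+ size la else 0.

(* induced product:
   (f . g)(la) = sum over alpha U beta U gamma = la (multiset unions)
                 of f(alpha) g(beta) mu(gamma) *)
Definition odot (f g : part -> rat) (la : part) : rat :=
  \sum_(a <- submultisets la)
    \sum_(b <- submultisets (mkpart (mdiff la a)))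
       f a * g b * mu (mkpart (mdiff (mdiff la a) b)).

(* Bernoulli numbers, B_0 = 1, sum_{j<=n} C(n+1,j) B_j = 0 for n >= 1
   (so B_1 = -1/2). *)
Fixpoint bern_list (n : nat) : seq rat :=
  if n is n'.+1 then
    let s := bern_list n' in
    rcons s (- (n'.+2)%:R^-1 *
             \sum_(j < n'.+1) ('C(n'.+2, j))%:R * nth 0 s j)
  else [:: 1].

Definition bernoulli (n : nat) : rat := nth 0 (bern_list n) n.

Definition S (m : nat) (la : part) : rat :=
  - bernoulli m / (2 * m)%:R + \sum_(x <- la) (x ^ (m - 1))%:R.

Definition S0 (m : nat) (la : part) : rat := S m la - S m empty_part.

Definition r (m : nat) (la : part) : nat := count_mem m (pval la).

(* Faulhaber polynomial F_l evaluated at n : nat (F_l(0) = 0) *)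
Definition F (l n : nat) : rat := \sum_(1 <= i < n.+1) (i ^ (l - 1))%:R.

(* T_{k,l}; the sum over m' >= 1 only has nonzero terms for m' a part *)
Definition T (k l : nat) (la : part) : rat :=
  - bernoulli (k + l) / (2 * (k + l))%:R * ((l == 1%N)%:R + (k == 0%N)%:R)
  + \sum_(m' <- undup (pval la)) (m' ^ k)%:R * F l (r m' la).

Definition conn (m : nat) (f : part -> rat) (la : part) : rat :=
  S m la * f la - odot (S m) f la.

Inductive inT : (part -> rat) -> Prop :=
| inT1 : inT (fun _ => 1)
| inTT k l : (0 < l)%N -> inT (T k l)
| inTD f g : inT f -> inT g -> inT (fun la => f la + g la)
| inTZ (a : rat) f : inT f -> inT (fun la => a * f la)
| inTM f g : inT f -> inT g -> inT (odot f g).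

(* Main.v *)
Require Import Defs.
From HB Require Import structures.
From mathcomp Require Import all_boot all_order all_algebra.
From mathcomp Require Import zify ring.
From Stdlib Require Import FunctionalExtensionality.
Import Order.TTheory GRing.Theory Num.Theory.
Local Open Scope ring_scope.
Set Implicit Arguments. Unset Strict Implicit. Unset Printing Implicit Defensive.

Definition cnt (s : seq nat) (n : nat) : nat := count_mem n s.

Lemma perm_cnt (s t : seq nat) : (forall n, cnt s n = cnt t n) -> perm_eq s t.
Proof. by move=> H; apply/allP => x _ /=; have := H x; rewrite /cnt => ->. Qed.

Lemma cnt_perm (s t : seq nat) : perm_eq s t -> forall n, cnt s n = cnt t n.
Proof. by move=> /permP H n; rewrite /cnt H. Qed.

Lemma part_pos (la : part) : all (fun x => (0 < x)%N) (pval la).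
Proof. by case: la => s /= /andP []. Qed.

Lemma part_sorted (la : part) : sorted geq (pval la).
Proof. by case: la => s /= /andP []. Qed.

Lemma cnt_part0 (la : part) : cnt la 0 = 0%N.
Proof.
rewrite /cnt; apply/count_memPn; apply/negP => H.
by move/allP: (part_pos la) => /(_ _ H).
Qed.

Lemma geq_total : total geq. Proof. by move=> x y; apply: leq_total. Qed.
Lemma geq_trans : transitive geq. Proof. by move=> x y z /= H1 H2; apply: leq_trans H2 H1. Qed.
Lemma geq_anti : antisymmetric geq.
Proof. by move=> x y /andP [H1 H2]; apply/eqP; rewrite eqn_leq; apply/andP; split. Qed.

Lemma mkpart_perm (s t : seq nat) : perm_eq s t -> mkpart s = mkpart t.
Proof.
move=> H; apply: val_inj => /=.
apply/(perm_sortP geq_total geq_trans geq_anti).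
by apply: perm_filter.
Qed.

Lemma mkpart_id (la : part) : mkpart la = la.
Proof.
apply: val_inj => /=.
rewrite (all_filterP (part_pos la)).
by apply: sorted_sort; [apply: geq_trans | apply: part_sorted].
Qed.

Lemma cnt_mkpart (s : seq nat) n :
  cnt (mkpart s) n = if (0 < n)%N then cnt s n else 0%N.
Proof.
rewrite /cnt /= (permP (permEl (perm_sort _ _))) count_filter.
case: n => [|n] /=.
  by rewrite (eq_count (a2:=pred0)) ?count_pred0 // => x /=; case: x.
by apply: eq_count => x /=; case: eqP => // ->.
Qed.

Lemma partP (a b : part) : (forall n, (0 < n)%N -> cnt a n = cnt b n) -> a = b.
Proof.
move=> H; rewrite -(mkpart_id a) -(mkpart_id b); apply: mkpart_perm.
apply: perm_cnt => -[|n]; first by rewrite !cnt_part0.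
exact: H.
Qed.

Lemma cons_inj_b (x : bool) : injective (cons x).
Proof. by move=> u v /(congr1 behead). Qed.

Lemma mem_allbits b n : (b \in allbits n) = (size b == n).
Proof.
elim: n b => [|n IH] b /=; first by case: b.
rewrite [allbits _]/= !mem_cat in_nil orbF.
case: b => [|x t] /=.
  by apply/negP => /orP [] /mapP [? _].
rewrite eqSS -IH; case: x.
  rewrite (mem_map (@cons_inj_b true)).
  by case: (t \in allbits n) => //=; apply/negP => /mapP [? _].
rewrite (mem_map (@cons_inj_b false)).
by case: (t \in allbits n); rewrite ?orbT // orbF; apply/negP => /mapP [? _].
Qed.

Definition subm (a la : seq nat) := forall n, (cnt a n <= cnt la n)%N.

Lemma mem_subms (la a : part) : (a \in submultisets la) <-> subm a la.
Proof.
rewrite /submultisets mem_undup; split.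
  move=> /mapP [b _ ->] n; rewrite cnt_mkpart.
  case: (0 < n)%N => //; exact: leq_count_mask.
move=> /count_maskP [b Hb Hp]; apply/mapP; exists b.
  by rewrite mem_allbits Hb.
rewrite -(mkpart_id a); apply: mkpart_perm; exact: Hp.
Qed.

Lemma subms_uniq (la : part) : uniq (submultisets la).
Proof. exact: undup_uniq. Qed.

Lemma cnt_mdiff l a n : cnt (mdiff l a) n = (cnt l n - cnt a n)%N.
Proof.
elim: a => [|x a IH] /=; first by rewrite subn0.
rewrite /cnt count_mem_rem -/(cnt _ _) IH /= -subnDA.
by rewrite /cnt addnC.
Qed.

Definition compl (la a : part) : part := mkpart (mdiff la a).
Definition un (a b : part) : part := mkpart (a ++ b).

Lemma cnt_compl (la a : part) n : cnt (compl la a) n = (cnt la n - cnt a n)%N.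
Proof.
rewrite cnt_mkpart cnt_mdiff; case: n => // ; by rewrite !cnt_part0.
Qed.

Lemma cnt_un (a b : part) n : cnt (un a b) n = (cnt a n + cnt b n)%N.
Proof.
rewrite cnt_mkpart /cnt count_cat; case: n => //.
by rewrite -!/(cnt _ 0) !cnt_part0.
Qed.

Lemma cnt_mem (la : part) n : (0 < cnt la n)%N = (n \in pval la).
Proof. by rewrite /cnt -has_count has_pred1. Qed.

Definition conv (f g : part -> rat) (la : part) : rat :=
  \sum_(a <- submultisets la) f a * g (compl la a).

Lemma odotE f g la : odot f g la = conv f (conv g mu) la.
Proof.
rewrite /odot /conv; apply: eq_bigr => a _.
rewrite mulr_sumr; apply: eq_bigr => b _.
rewrite mulrA; congr (_ * mu _).
apply: partP => n Hn.
by rewrite !cnt_mkpart Hn !cnt_mdiff -/(compl la a) cnt_compl.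
Qed.

Lemma sum_invol (s : seq part) (h : part -> part) (F : part -> rat) :
  uniq s -> (forall a, a \in s -> h a \in s) -> (forall a, a \in s -> h (h a) = a) ->
  \sum_(a <- s) F (h a) = \sum_(a <- s) F a.
Proof.
move=> Us Hin Hh; rewrite -(big_map h predT F); apply: perm_big.
apply: uniq_perm => //.
  rewrite map_inj_in_uniq // => x y Hx Hy Hxy.
  by rewrite -(Hh x Hx) Hxy Hh.
move=> x; apply/mapP/idP => [[y Hy ->] | Hx]; first exact: Hin.
by exists (h x); [apply: Hin | rewrite Hh].
Qed.

Lemma subm_compl (la a : part) : subm (compl la a) la.
Proof. by move=> n; rewrite cnt_compl leq_subr. Qed.

Lemma compl_invol (la a : part) : subm a la -> compl la (compl la a) = a.
Proof.
move=> H; apply: partP => n _; rewrite !cnt_compl.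
by have := H n; lia.
Qed.

Lemma convC f g la : conv f g la = conv g f la.
Proof.
rewrite /conv -(@sum_invol _ (compl la) (fun a => g a * f (compl la a))).
- apply: eq_big_seq => a Ha; rewrite compl_invol; first by rewrite mulrC.
  by apply/mem_subms.
- exact: subms_uniq.
- by move=> a _; apply/mem_subms; apply: subm_compl.
- by move=> a /mem_subms; apply: compl_invol.
Qed.

Lemma uniq_pairs (s : seq part) (t : part -> seq part) :
  uniq s -> (forall x, x \in s -> uniq (t x)) ->
  uniq [seq (x, y) | x <- s, y <- t x].
Proof.
elim: s => [|x s IH] //= /andP [Hx Us] Ht.
rewrite cat_uniq IH ?andbT //; last by move=> y Hy; apply: Ht; rewrite inE Hy orbT.
rewrite map_inj_uniq ?Ht ?mem_head //=; last by move=> u v [].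
apply/hasP => -[p /allpairsPdep [y [z [Hy _ ->]]] /mapP [w _ []]] Eyx _.
by move: Hx; rewrite -Eyx Hy.
Qed.

Lemma compl_un (a b : part) : compl (un a b) a = b.
Proof. by apply: partP => n _; rewrite cnt_compl cnt_un; lia. Qed.

Lemma convA f g h la : conv f (conv g h) la = conv (conv f g) h la.
Proof.
pose L1 := [seq (a, b) | a <- submultisets la, b <- submultisets (compl la a)].
pose L2 := [seq (d, a) | d <- submultisets la, a <- submultisets d].
pose phi := fun p : part * part => (un p.1 p.2, p.1).
pose F2 := fun p : part * part => f p.2 * g (compl p.1 p.2) * h (compl la p.1).
have E1 : conv f (conv g h) la = \sum_(p <- L1) F2 (phi p).
  rewrite /conv big_allpairs_dep /=; apply: eq_big_seq => a Ha.
  rewrite mulr_sumr; apply: eq_big_seq => b Hb.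
  rewrite /F2 /phi /= compl_un mulrA; congr (_ * h _).
  move/mem_subms: Ha => Ha; move/mem_subms: Hb => Hb.
  apply: partP => n _; rewrite !cnt_compl cnt_un.
  by have := Ha n; have := Hb n; rewrite cnt_compl; lia.
have E2 : conv (conv f g) h la = \sum_(p <- L2) F2 p.
  rewrite /conv big_allpairs_dep /=; apply: eq_bigr => d _.
  by rewrite mulr_suml.
rewrite E1 E2 -(big_map phi predT F2); apply: perm_big.
apply: uniq_perm.
- rewrite map_inj_in_uniq.
    by apply: uniq_pairs => [|x _]; apply: subms_uniq.
  move=> [a b] [a' b'] _ _ H; have E := congr1 fst H; have Ea := congr1 snd H.
  rewrite /= in E Ea.
  by rewrite -(compl_un a b) E Ea compl_un.
- by apply: uniq_pairs => [|x _]; apply: subms_uniq.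
move=> [d a]; apply/mapP/allpairsPdep.
  move=> [[a' b] /allpairsPdep [x [y [Hx Hy [E1' E2']]]] [-> ->]] /=.
  subst a' b; exists (un x y), x; split => //.
  - apply/mem_subms => n; rewrite cnt_un.
    move/mem_subms: Hx => Hx; move/mem_subms: Hy => Hy.
    by have := Hx n; have := Hy n; rewrite cnt_compl; lia.
  - by apply/mem_subms => n; rewrite cnt_un; lia.
move=> [d' [a' [Hd Ha [-> ->]]]].
move/mem_subms: Hd => Hd; move/mem_subms: Ha => Ha.
exists (a', compl d' a').
  apply/allpairsPdep; exists a', (compl d' a'); split => //.
  - by apply/mem_subms => n; have := Hd n; have := Ha n; lia.
  - by apply/mem_subms => n; rewrite !cnt_compl; have := Hd n; have := Ha n; lia.
rewrite /phi /=; congr (_, _).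
by apply: partP => n _; rewrite cnt_un cnt_compl; have := Ha n; lia.
Qed.

Lemma perm_mkpart (s : seq nat) : all (fun x => (0 < x)%N) s -> perm_eq (mkpart s) s.
Proof.
move=> H; rewrite /= (all_filterP H); exact: permEl (perm_sort _ _).
Qed.

Lemma mu_mkpart (s : seq nat) : all (fun x => (0 < x)%N) s ->
  mu (mkpart s) = if uniq s then (-1) ^+ size s else 0.
Proof.
move=> H; have P := perm_mkpart H.
by rewrite /mu (perm_uniq P) (perm_size P).
Qed.

Definition tog x (a : part) : part :=
  if cnt a x == 0%N then mkpart (x :: a)
  else if cnt a x == 1%N then mkpart (rem x a) else a.

Lemma cnt_tog x (a : part) n : (0 < x)%N ->
  cnt (tog x a) n = if cnt a x == 0%N then (cnt a n + (x == n))%N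
    else if cnt a x == 1%N then (cnt a n - (x == n))%N else cnt a n.
Proof.
move=> Hx; rewrite /tog; case: ifP => H0; last case: ifP => H1 //.
  rewrite cnt_mkpart; case: n => [|n] /=; first by rewrite cnt_part0 (gtn_eqF Hx).
  by rewrite /cnt /= addnC.
rewrite cnt_mkpart; case: n => [|n] /=; first by rewrite cnt_part0 (gtn_eqF Hx).
by rewrite /cnt count_mem_rem.
Qed.

Lemma all_rem (s : seq nat) x P : all P s -> all P (rem x s).
Proof. by move=> /allP H; apply/allP => y /mem_rem /H. Qed.

Lemma mu_tog x (a : part) : (0 < x)%N -> mu (tog x a) = - mu a.
Proof.
move=> Hx; rewrite /tog; case: ifP => H0; last case: ifP => H1.
- rewrite mu_mkpart /=; last by rewrite Hx part_pos.
  have -> : (x \in pval a) = false by rewrite -cnt_mem (eqP H0).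
  by rewrite /mu /=; case: (uniq a); rewrite ?oppr0 // exprS mulN1r.
- have xa : x \in pval a by rewrite -cnt_mem (eqP H1).
  have P := perm_to_rem xa.
  rewrite mu_mkpart; last exact: all_rem (part_pos a).
  rewrite /mu (perm_uniq P) (perm_size P) /=.
  have -> : (x \in rem x a) = false.
    by apply/negbTE/count_memPn; rewrite count_mem_rem -/(cnt _ _) (eqP H1) eqxx.
  by case: (uniq _); rewrite /= ?oppr0 // exprS mulN1r opprK.
- rewrite /mu; case U: (uniq a); last by rewrite oppr0.
  move: (count_uniq_mem x U); rewrite -/(cnt _ _).
  by case: (x \in pval a) => /= E; rewrite E in H0 H1.
Qed.

Lemma tog_sub x (a la : part) : (0 < x)%N -> (0 < cnt la x)%N -> subm a la -> subm (tog x a) la.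
Proof.
move=> Hx Hl Ha n; rewrite cnt_tog //; have := Ha n; have := Ha x.
case: (x =P n) => [<-|_]; rewrite ?eqxx /=;
  case: ifP => /eqP H0; try case: ifP => /eqP H1; lia.
Qed.

Lemma tog_invol x (a : part) : (0 < x)%N -> tog x (tog x a) = a.
Proof.
move=> Hx; apply: partP => n _; rewrite !cnt_tog //.
case: (x =P n) => [<-|_]; rewrite ?eqxx /=;
  case: (cnt a x) => [|[|k]] /=; lia.
Qed.

Definition onef : part -> rat := fun _ => 1.
Definition del (la : part) : rat := (la == empty_part)%:R.
Definition s0 (m : nat) (la : part) : rat := \sum_(x <- pval la) ((x ^ (m - 1))%:R : rat).

Lemma conv_linl a f g h la :
  conv (fun x => a * f x + g x) h la = a * conv f h la + conv g h la.
Proof.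
rewrite /conv mulr_sumr -big_split /=; apply: eq_bigr => b _.
by rewrite mulrDl mulrA.
Qed.

Lemma conv_linr a f g h la :
  conv f (fun x => a * g x + h x) la = a * conv f g la + conv f h la.
Proof.
rewrite /conv mulr_sumr -big_split /=; apply: eq_bigr => b _.
by rewrite mulrDr mulrCA mulrA.
Qed.

Lemma cnt_empty n : cnt empty_part n = 0%N.
Proof. by []. Qed.

Lemma subm_refl (la : part) : subm la la.
Proof. by []. Qed.

Lemma conv_del f la : conv f del la = f la.
Proof.
rewrite /conv (bigD1_seq la) /=; last exact: subms_uniq; last by apply/mem_subms.
rewrite /del.
have -> : compl la la = empty_part by apply: partP => n _; rewrite cnt_compl subnn.
rewrite eqxx mulr1 big1_seq ?addr0 // => a /andP [Ha /mem_subms Hs].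
have -> : (compl la a == empty_part) = false; last by rewrite mulr0.
apply/negP => /eqP E; move/negP: Ha; apply; apply/eqP.
apply: partP => n _; have := congr1 (fun p : part => cnt p n) E; rewrite cnt_compl cnt_empty.
by have := Hs n; lia.
Qed.

Lemma subms_empty : submultisets empty_part = [:: empty_part].
Proof. by []. Qed.

Lemma conv_mu1 la : conv mu onef la = del la.
Proof.
rewrite /conv.
case: la => s Hs; case: s Hs => [|x s] Hs.
  have -> : Part Hs = empty_part by apply: val_inj.
  by rewrite subms_empty big_seq1 /del eqxx /onef mulr1.
set la := Part Hs.
have Hx : (0 < x)%N by have /andP [] := part_pos la.
have Hl : (0 < cnt la x)%N by rewrite cnt_mem /= mem_head.
have -> : del la = 0.
  rewrite /del; case: eqP => // E; move: Hl; rewrite E //.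
rewrite (eq_bigr (fun a => mu a)); last by move=> a _; rewrite /onef mulr1.
set sg := \sum_(_ <- _) _.
have E : sg = - sg.
  rewrite {1}/sg -(@sum_invol _ (tog x)).
  - by rewrite /sg -sumrN; apply: eq_bigr => a _; rewrite mu_tog.
  - exact: subms_uniq.
  - by move=> a /mem_subms Ha; apply/mem_subms; apply: tog_sub.
  - by move=> a _; apply: tog_invol.
move/eqP: E; rewrite -subr_eq0 opprK -mulr2n mulrn_eq0 /=.
by move/eqP.
Qed.

Lemma s0_split m (la a : part) : subm a la -> s0 m la = s0 m a + s0 m (compl la a).
Proof.
move=> H; rewrite /s0 -big_cat /=; apply: perm_big.
apply: perm_cnt => n; rewrite /cnt count_cat -!/(cnt _ _) cnt_compl.
by have := H n; lia.
Qed.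

Lemma conv_deriv m f g la :
  s0 m la * conv f g la =
  conv (fun x => s0 m x * f x) g la + conv f (fun x => s0 m x * g x) la.
Proof.
rewrite /conv mulr_sumr -big_split /=; apply: eq_big_seq => a /mem_subms Ha.
rewrite (s0_split m Ha); ring.
Qed.

Lemma s0_empty m : s0 m empty_part = 0.
Proof. by rewrite /s0 /= big_nil. Qed.

Lemma s0_del m la : s0 m la * del la = 0.
Proof. by rewrite /del; case: eqP => [->|_]; rewrite ?s0_empty ?mul0r ?mulr0. Qed.

Lemma uniq_allpairs_gen (S T R : eqType) (f : S -> T -> R) (s : seq S) (t : S -> seq T) :
  uniq s -> (forall x, x \in s -> uniq (t x)) ->
  (forall x x' y y', x \in s -> x' \in s -> y \in t x -> y' \in t x' ->
     f x y = f x' y' -> x = x') ->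
  (forall x y y', x \in s -> y \in t x -> y' \in t x -> f x y = f x y' -> y = y') ->
  uniq [seq f x y | x <- s, y <- t x].
Proof.
elim: s => [|x s IH] //= /andP [Hx Us] Ht Hi1 Hi2.
rewrite cat_uniq IH ?andbT //; first last.
- by move=> u y y' Hu Hy Hy' E; apply: (Hi2 u); rewrite // inE Hu orbT.
- by move=> u u' y y' Hu Hu' Hy Hy' E; apply: (Hi1 u u' y y'); rewrite // inE ?Hu ?Hu' ?orbT.
- by move=> y Hy; apply: Ht; rewrite inE Hy orbT.
rewrite map_inj_in_uniq ?Ht ?mem_head //=; last first.
  by move=> y y' Hy Hy' E; apply: (Hi2 x) => //; rewrite mem_head.
apply/hasP => -[p /allpairsPdep [u [y [Hu Hy ->]]] /mapP [y' Hy' E]].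
have Eu := Hi1 x u y' y (mem_head _ _) _ Hy' Hy (esym E).
by move: Hx; rewrite Eu ?Hu //; rewrite inE Hu orbT.
Qed.

Definition isconst (a : part) : bool :=
  if pval a is x :: _ then all (pred1 x) a else false.

Definition Pw (w : nat -> nat -> rat) (a : part) : rat :=
  if isconst a then w (head 0%N (pval a)) (size a) else 0.

Lemma sorted_nseq_geq i n : sorted geq (nseq i n).
Proof. by elim: i => [|[|i] IH] //=; rewrite leqnn. Qed.

Lemma val_mkpart_nseq i n : (0 < n)%N -> pval (mkpart (nseq i n)) = nseq i n.
Proof.
move=> Hn /=; rewrite (all_filterP _); last by rewrite all_nseq Hn orbT.
by apply: sorted_sort; [apply: geq_trans | apply: sorted_nseq_geq].
Qed.

Lemma convPw1 w la :
  conv (Pw w) onef la =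
  \sum_(n <- undup (pval la)) \sum_(i <- iota 1 (cnt la n)) w n i.
Proof.
rewrite /conv (eq_bigr (Pw w)); last by move=> a _; rewrite /onef mulr1.
rewrite /Pw -big_mkcond /= -big_filter.
pose L := [seq mkpart (nseq i n) | n <- undup (pval la), i <- iota 1 (cnt la n)].
have posn : forall n, n \in undup (pval la) -> (0 < n)%N.
  by move=> n; rewrite mem_undup => /(allP (part_pos la)).
rewrite (perm_big L).
  rewrite big_allpairs_dep; apply: eq_big_seq => n Hn; apply: eq_big_seq => i Hi.
  have Hi0 : (0 < i)%N by move: Hi; rewrite mem_iota; case/andP.
  rewrite /isconst !val_mkpart_nseq ?posn //.
  case: i Hi Hi0 => [|i] //= _ _.
  by rewrite size_nseq.
apply: uniq_perm.
- by rewrite filter_uniq // subms_uniq.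
- apply: uniq_allpairs_gen.
  + exact: undup_uniq.
  + by move=> n _; apply: iota_uniq.
  + move=> n n' i i' Hn Hn' Hi Hi' /(congr1 pval).
    rewrite !val_mkpart_nseq ?posn //.
    move: Hi Hi'; rewrite !mem_iota; case: i => // i; case: i' => // i' _ _.
    by case.
  + move=> n i i' Hn Hi Hi' /(congr1 pval).
    by rewrite !val_mkpart_nseq ?posn // => /(congr1 size); rewrite !size_nseq.
move=> a; rewrite mem_filter; apply/andP/allpairsPdep.
  case=> Hc /mem_subms Hs.
  have [x [s E]] : exists x s, pval a = x :: s.
    by move: Hc; rewrite /isconst; case: (pval a) => [|x s] // _; exists x, s.
  move: Hc; rewrite /isconst E => Hc.
  have Ea : pval a = nseq (size a) x by rewrite E; apply/all_pred1P.
  have Hca : cnt a x = size a.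
    rewrite /cnt {1}Ea count_nseq.
    have -> : pred1 x x = true by apply/eqP.
    by rewrite mul1n.
  have Hsz : (0 < size a)%N by rewrite E.
  exists x, (size a); split.
  - rewrite mem_undup -cnt_mem; have := Hs x; lia.
  - rewrite mem_iota; have := Hs x; lia.
  - apply: val_inj; change (pval a = pval (mkpart (nseq (size a) x))).
    rewrite val_mkpart_nseq //.
    have : x \in pval la by rewrite -cnt_mem; have := Hs x; lia.
    by move/(allP (part_pos la)).
move=> [n [i [Hn Hi ->]]]; split.
  rewrite /isconst val_mkpart_nseq ?posn //.
  move: Hi; rewrite mem_iota; case: i => // i _ /=.
  by rewrite eqxx all_pred1_nseq.
apply/mem_subms => y; rewrite /cnt val_mkpart_nseq ?posn // count_nseq.
move: Hi; rewrite mem_iota /=; case: eqP => [<-|_]; rewrite -/(cnt _ _); lia.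
Qed.

Definition addf (f g : part -> rat) : part -> rat := fun x => f x + g x.
Definition oppf (f : part -> rat) : part -> rat := fun x => - f x.
Definition Dm (m : nat) (f : part -> rat) : part -> rat := fun x => s0 m x * f x.

Lemma convCF f g : conv f g = conv g f.
Proof. by apply: functional_extensionality => la; apply: convC. Qed.

Lemma convAF f g h : conv f (conv g h) = conv (conv f g) h.
Proof. by apply: functional_extensionality => la; apply: convA. Qed.

Lemma convDlF f g h : conv (addf f g) h = addf (conv f h) (conv g h).
Proof.
apply: functional_extensionality => la.
by rewrite /conv /addf -big_split /=; apply: eq_bigr => a _; rewrite mulrDl.
Qed.

Lemma convNlF f h : conv (oppf f) h = oppf (conv f h).
Proof.
apply: functional_extensionality => la.
by rewrite /conv /oppf -sumrN; apply: eq_bigr => a _; rewrite mulNr.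
Qed.

Lemma convNrF f h : conv f (oppf h) = oppf (conv f h).
Proof. by rewrite convCF convNlF convCF. Qed.

Lemma conv_delF f : conv f del = f.
Proof. by apply: functional_extensionality => la; apply: conv_del. Qed.

Lemma conv_delFl f : conv del f = f.
Proof. by rewrite convCF conv_delF. Qed.

Lemma conv_mu1F : conv mu onef = del.
Proof. by apply: functional_extensionality => la; apply: conv_mu1. Qed.

Lemma conv_1muF : conv onef mu = del.
Proof. by rewrite convCF conv_mu1F. Qed.

Lemma derivF m f g : Dm m (conv f g) = addf (conv (Dm m f) g) (conv f (Dm m g)).
Proof. by apply: functional_extensionality => la; apply: conv_deriv. Qed.

Lemma odotF f g : odot f g = conv f (conv g mu).
Proof. by apply: functional_extensionality => la; apply: odotE. Qed.

Lemma conv0l g : conv (fun _ => 0) g = fun _ => 0.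
Proof.
by apply: functional_extensionality => la; rewrite /conv big1 // => a _; rewrite mul0r.
Qed.

Lemma conv0r g : conv g (fun _ => 0) = fun _ => 0.
Proof. by rewrite convCF conv0l. Qed.

Lemma Part1F m : Dm m mu = oppf (conv (s0 m) (conv mu mu)).
Proof.
have H : conv (Dm m mu) onef = oppf (conv mu (s0 m)).
  apply: functional_extensionality => la.
  have := conv_deriv m mu onef la.
  rewrite conv_mu1 s0_del.
  have -> : (fun x => s0 m x * onef x) = s0 m.
    by apply: functional_extensionality => x; rewrite /onef mulr1.
  move/eqP; rewrite eq_sym addr_eq0 => /eqP; exact.
rewrite -{1}(conv_delF (Dm m mu)) -conv_1muF (convAF (Dm m mu) onef mu) H.
by rewrite convNlF (convCF mu (s0 m)) -convAF.
Qed.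

Lemma SE m : S m = (fun x => S m empty_part * onef x + s0 m x).
Proof.
apply: functional_extensionality => x.
by rewrite /S /s0 /onef /= big_nil addr0 mulr1.
Qed.

Lemma S0F m : S0 m = s0 m.
Proof.
apply: functional_extensionality => x.
by rewrite /S0 {1}SE /onef; ring.
Qed.

Lemma conn_eq m f :
  conn m f = fun la => s0 m la * f la - conv (s0 m) (conv f mu) la.
Proof.
apply: functional_extensionality => la.
rewrite /conn odotE.
have -> : conv (S m) (conv f mu) la = S m empty_part * f la + conv (s0 m) (conv f mu) la.
  rewrite [in LHS]SE conv_linl; congr (_ * _ + _).
  by rewrite (convCF f mu) (convAF onef mu f) conv_1muF conv_delFl.
rewrite {1}SE /onef; ring.
Qed.

Lemma conn_psi m f : conn m f = conv (Dm m (conv f mu)) onef.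
Proof.
rewrite conn_eq derivF convDlF Part1F convNrF convNlF.
have E1 : conv (conv (Dm m f) mu) onef = Dm m f.
  by rewrite -convAF conv_mu1F conv_delF.
have E2 : conv (conv f (conv (s0 m) (conv mu mu))) onef = conv (s0 m) (conv f mu).
  rewrite -convAF -(convAF (s0 m) (conv mu mu) onef) -(convAF mu mu onef).
  rewrite conv_mu1F conv_delF (convAF f (s0 m) mu) (convCF f (s0 m)).
  by rewrite -convAF.
rewrite E1 E2; apply: functional_extensionality => la.
by rewrite /addf /oppf /Dm.
Qed.

Lemma conn_lin m (a : rat) f g :
  conn m (fun la => a * f la + g la) = (fun la => a * conn m f la + conn m g la).
Proof.
rewrite !conn_eq.
have -> : conv (fun x => a * f x + g x) mu = fun x => a * conv f mu x + conv g mu x.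
  by apply: functional_extensionality => x; rewrite conv_linl.
apply: functional_extensionality => la; rewrite conv_linr; ring.
Qed.

Lemma conn_leibniz m f g :
  conn m (odot f g) = (fun la => odot (conn m f) g la + odot f (conn m g) la).
Proof.
rewrite !odotF !conn_psi.
set G := conv g mu.
have -> : conv (conv f G) mu = conv (conv f mu) G.
  by rewrite -convAF (convCF G mu) convAF.
rewrite derivF convDlF.
have E1 : conv (conv (Dm m (conv f mu)) G) onef = conv (conv (Dm m (conv f mu)) onef) G.
  by rewrite -convAF (convCF G onef) convAF.
have E2 : conv (conv (conv f mu) (Dm m G)) onef = conv f (Dm m G).
  rewrite (convCF (conv f mu) (Dm m G)) -convAF -(convAF f mu onef) conv_mu1F.
  by rewrite conv_delF convCF.
have E3 : conv (conv (Dm m G) onef) mu = Dm m G.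
  by rewrite -convAF conv_1muF conv_delF.
by rewrite E1 E2 E3.
Qed.

Lemma conn_zero m : conn m (fun _ => 0) = fun _ => 0.
Proof.
rewrite conn_eq conv0l conv0r; apply: functional_extensionality => la.
by rewrite mulr0 subr0.
Qed.

Lemma conn_one m : conn m onef = fun _ => 0.
Proof.
rewrite conn_psi conv_1muF.
have -> : Dm m del = fun _ => 0.
  by apply: functional_extensionality => la; rewrite /Dm s0_del.
by rewrite conv0l.
Qed.

Definition wT (k l : nat) (n i : nat) : rat := (n ^ k)%:R * (i ^ (l - 1))%:R.

Definition cT (k l : nat) : rat :=
  - bernoulli (k + l) / (2 * (k + l))%:R * ((l == 1%N)%:R + (k == 0%N)%:R).

Lemma TE k l : T k l = fun la => cT k l * onef la + conv (Pw (wT k l)) onef la.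
Proof.
apply: functional_extensionality => la.
rewrite /T convPw1 /onef mulr1 /cT; congr (_ + _).
apply: eq_bigr => n _; rewrite /F /r /wT mulr_sumr.
by rewrite /index_iota subSS subn0.
Qed.

Lemma sum_nseq_pow m i x :
  \sum_(y <- nseq i x) ((y ^ (m - 1))%:R : rat) = (i * x ^ (m - 1))%:R.
Proof.
elim: i => [|i IH]; first by rewrite big_nil mul0n.
by rewrite /= big_cons IH -natrD mulSn.
Qed.

Lemma Dm_Pw m k l : (1 <= m)%N -> (0 < l)%N ->
  Dm m (Pw (wT k l)) = Pw (wT (k + m - 1) l.+1).
Proof.
move=> Hm Hl; apply: functional_extensionality => a.
rewrite /Dm /Pw; case Hc: (isconst a); last by rewrite mulr0.
have [x [s E]] : exists x s, pval a = x :: s.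
  by move: Hc; rewrite /isconst; case: (pval a) => [|x s] // _; exists x, s.
move: Hc; rewrite /isconst E => Hc.
have Ea : pval a = nseq (size a) x by rewrite E; apply/all_pred1P.
rewrite /s0 Ea sum_nseq_pow E /= /wT -!natrM; congr (_%:R).
have -> : (k + m - 1 = k + (m - 1))%N by lia.
have -> : (l.+1 - 1 = (l - 1).+1)%N by lia.
rewrite expnD expnS; ring.
Qed.

Lemma conn_T m k l : (2 <= m)%N -> (0 < l)%N -> conn m (T k l) = T (k + m - 1) l.+1.
Proof.
move=> Hm Hl; rewrite conn_psi.
have -> : conv (T k l) mu = fun la => cT k l * del la + Pw (wT k l) la.
  apply: functional_extensionality => la; rewrite TE conv_linl.
  by rewrite conv_1muF -convAF conv_1muF conv_delF.
have -> : Dm m (fun la => cT k l * del la + Pw (wT k l) la) = Dm m (Pw (wT k l)).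
  apply: functional_extensionality => la; rewrite /Dm mulrDr mulrCA s0_del.
  by rewrite mulr0 add0r.
rewrite Dm_Pw //; last by lia.
rewrite (TE (k + m - 1) l.+1) /cT.
have -> : (l.+1 == 1%N) = false by case: l Hl.
have -> : ((k + m - 1)%N == 0%N) = false by apply/eqP; lia.
apply: functional_extensionality => la; by rewrite add0r mulr0 mul0r add0r.
Qed.

Lemma double0 (x : rat) : x = x + x -> x = 0.
Proof. by move=> H; apply: (@addrI _ x); rewrite addr0 -H. Qed.

Unset Implicit Arguments.
Set Strict Implicit.

Theorem lemma5p1p2 (m : nat) : (2 <= m)%N -> ~~ odd m ->
  (forall la, odot (S0 m) mu la = - (S0 m la * mu la)) /\
  (forall (a : rat) (f g : part -> rat),
     conn m (fun la => a * f la + g la) = (fun la => a * conn m f la + conn m g la)) /\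
  (forall f g,
     conn m (odot f g) = (fun la => odot (conn m f) g la + odot f (conn m g) la)) /\
  (forall k l, (0 < l)%N -> conn m (T k l) = T (k + m - 1) l.+1) /\
  (forall D : (part -> rat) -> part -> rat,
     (forall (a : rat) f g, inT f -> inT g ->
        D (fun la => a * f la + g la) = (fun la => a * D f la + D g la)) ->
     (forall f g, inT f -> inT g ->
        D (odot f g) = (fun la => odot (D f) g la + odot f (D g) la)) ->
     (forall k l, (0 < l)%N -> D (T k l) = T (k + m - 1) l.+1) ->
     forall f, inT f -> D f = conn m f).
Proof.
move=> Hm _.
split.
  move=> la; rewrite S0F odotE.
  have := congr1 (fun h => h la) (Part1F m); rewrite /Dm /oppf /= => ->.
  by rewrite opprK.
split; first exact: conn_lin.
split; first exact: conn_leibniz.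
split; first by move=> k l Hl; apply: conn_T.
move=> D HL HM HT.
have inT0 : inT (fun _ => 0).
  have := inTZ 0 inT1.
  have -> : (fun la : part => 0 * 1) = (fun _ => 0 : rat).
    by apply: functional_extensionality => la; rewrite mul0r.
  by [].
have D0 : D (fun _ => 0) = fun _ => 0.
  have := HL 1 _ _ inT0 inT0.
  have -> : (fun la : part => 1 * (fun _ : part => 0 : rat) la + (fun _ => 0) la) = (fun _ => 0).
    by apply: functional_extensionality => la; rewrite mul1r addr0.
  move=> E; apply: functional_extensionality => la.
  have := congr1 (fun h => h la) E; rewrite /= mul1r; exact: double0.
have D1 : D onef = fun _ => 0.
  have := HM _ _ inT1 inT1.
  change (fun _ : part => 1 : rat) with onef.
  rewrite !odotF conv_1muF !conv_delF (convCF (D onef) mu) (convAF onef mu) conv_1muF.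
  rewrite conv_delFl => E; apply: functional_extensionality => la.
  have := congr1 (fun h => h la) E; rewrite /=; exact: double0.
move=> f0; elim.
- by change (D onef = conn m onef); rewrite D1 conn_one.
- by move=> k l Hl; rewrite HT // conn_T.
- move=> f g Hf IHf Hg IHg.
  have E : (fun la => f la + g la) = (fun la => 1 * f la + g la).
    by apply: functional_extensionality => la; rewrite mul1r.
  by rewrite E HL // conn_lin IHf IHg.
- move=> a f Hf IHf.
  have E : (fun la => a * f la) = (fun la => a * f la + (fun _ => 0 : rat) la).
    by apply: functional_extensionality => la; rewrite addr0.
  by rewrite E HL // conn_lin IHf D0 conn_zero.
- move=> f g Hf IHf Hg IHg.
  by rewrite HM // conn_leibniz IHf IHg.
Qed.
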